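(* Let $t \geq 4$ and $n \geq 1$ be integers, let $t' = [t/2]$, $x = \left[\frac{nt'-1}{t'-1}\right]$, and write $x-2 = tq + r$ with integers $q$ and $0 \leq r \leq t-1$. Let $R = R_{t-2,t}(K_{1,n})$. Then $R = x+1$ if and only if one of the following conditions holds: (a) $r = t-1 > 2q+4$ and $x$ is even; (b) $r = t-1 > 2q+4$ and $x$ and $t$ are odd; (c) $r = t-1$, $x$ is odd, and $t$ and $q+1$ are even; (d) $r < t-2$ and $t > 2r+4$ and $t$ is even; (e) $r < t-2$ and $t > 2q+2r+5$ and $t$ is odd.
   Context: $[a]$ denotes the integer part (floor) of a real number $a$. $K_{1,n}$ is the star with $n$ edges. For a graph $G$ and integers $1 \leq s < t$, $R_{s,t}(G)$ is the smallest positive integer $N$ such that every coloring of the edges of the complete graph $K_N$ with $t$ colors contains a (not necessarily induced) subgraph isomorphic to $G$ whose edges use at most $s$ distinct colors. *)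

(* Defs.v *)
From mathcomp Require Import all_boot all_order all_algebra.
Set Implicit Arguments. Unset Strict Implicit. Unset Printing Implicit Defensive.

(* An edge colouring of the complete graph K_N (vertex set 'I_N) with t colours
   (colour set 'I_t): a symmetric function on pairs of vertices; values on the
   diagonal are irrelevant. *)
Definition coloring (N t : nat) (c : 'I_N -> 'I_N -> 'I_t) : Prop :=
  forall u v, c u v = c v u.

(* A graph G = (V, e): e is a (symmetric, irreflexive) relation on a finite type V. *)
Definition has_few_colored_copy (V : finType) (e : rel V) (N t s : nat)
  (c : 'I_N -> 'I_N -> 'I_t) : Prop :=
  exists f : V -> 'I_N, injective f /\
    #|[set c (f u) (f v) | u in V, v in V & e u v]| <= s.

Definition ramsey_prop (V : finType) (e : rel V) (s t N : nat) : Prop :=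
  forall c : 'I_N -> 'I_N -> 'I_t, coloring c -> has_few_colored_copy e s c.

Definition is_Rst (V : finType) (e : rel V) (s t R : nat) : Prop :=
  0 < R /\ ramsey_prop e s t R /\
  forall N, 0 < N -> N < R -> ~ ramsey_prop e s t N.

Definition star_rel (n : nat) : rel 'I_n.+1 :=
  fun u v => ((val u == 0) && (val v != 0)) || ((val v == 0) && (val u != 0)).

(* Main.v *)
Require Import Defs.
From mathcomp Require Import all_boot all_order all_algebra.
From mathcomp Require Import zify.
From Stdlib Require Import Classical.
Import Order.TTheory GRing.Theory Num.Theory.

Set Implicit Arguments. Unset Strict Implicit. Unset Printing Implicit Defensive.

Section Gen.
Variables (N t : nat) (c : 'I_N -> 'I_N -> 'I_t).

Definition Acnt (v : 'I_N) (S : {set 'I_t}) := [set u | (u != v) && (c v u \in S)].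
Definition cnt v S := #|Acnt v S|.
Definition deg v k := cnt v [set k].

Lemma disjP (S S' : {set 'I_t}) : (forall k, k \in S -> k \in S' -> False) -> [disjoint S & S'].
Proof. move=> h; rewrite disjoint_subset; apply/subsetP=> k hk; rewrite inE; apply/negP=> hk'; exact: h hk hk'. Qed.

Lemma cnt_sub v (S S' : {set 'I_t}) : S \subset S' -> cnt v S <= cnt v S'.
Proof.
move=> sub; apply: subset_leq_card; apply/subsetP=> u.
rewrite !inE => /andP[-> /(subsetP sub) ->] //.
Qed.

Lemma cnt_U v (S S' : {set 'I_t}) : [disjoint S & S'] -> cnt v (S :|: S') = cnt v S + cnt v S'.
Proof.
move=> dis; rewrite /cnt -cardsUI.
have -> : Acnt v (S :|: S') = Acnt v S :|: Acnt v S'.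
  by apply/setP=> u; rewrite !inE; case: (u != v).
suff -> : Acnt v S :&: Acnt v S' = set0 by rewrite cards0 addn0.
apply/setP=> u; rewrite !inE.
case: (u != v) => //=; apply/negbTE/negP=> /andP[h1 h2].
by rewrite (disjointFr dis h1) in h2.
Qed.

Lemma cnt_T v : cnt v setT = N.-1.
Proof.
rewrite /cnt.
have -> : Acnt v setT = [set~ v] by apply/setP=> u; rewrite !inE andbT.
by rewrite cardsC1 card_ord.
Qed.

Lemma cnt_C v (S : {set 'I_t}) : cnt v S + cnt v (~: S) = N.-1.
Proof.
rewrite -cnt_U ?setUCr ?cnt_T //.
by apply: disjP=> k; rewrite inE => ->.
Qed.

Lemma cnt_pair v i j : i != j -> cnt v (~: [set i; j]) + deg v i + deg v j = N.-1.
Proof.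
move=> ij; rewrite -addnA /deg -cnt_U; first by rewrite addnC cnt_C.
by apply: disjP=> k; rewrite !inE => /eqP -> /eqP ji; rewrite ji eqxx in ij.
Qed.

Lemma cnt_sum v : \sum_k deg v k = N.-1.
Proof.
rewrite -(cnt_T v) /deg /cnt.
transitivity (\sum_(k : 'I_t) \sum_(u : 'I_N) ((u != v) && (c v u == k) : nat)).
  apply: eq_bigr=> k _; rewrite -sum1dep_card big_mkcond /=.
  by apply: eq_bigr=> u _; rewrite !inE; case: ifP.
rewrite exchange_big /= -sum1dep_card [in RHS]big_mkcond /=.
apply: eq_bigr=> u _; rewrite !inE andbT.
case: (u != v) => /=; last by rewrite big1.
by rewrite (bigD1 (c v u)) //= eqxx big1 // => k /negbTE; rewrite eq_sym => ->.
Qed.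

End Gen.

Set Implicit Arguments. Unset Strict Implicit. Unset Printing Implicit Defensive.

Section Copy.
Variables (N t s n : nat) (c : 'I_N -> 'I_N -> 'I_t).

Lemma copy_of_cnt v (S : {set 'I_t}) : coloring c -> #|S| <= s -> n <= cnt c v S ->
  has_few_colored_copy (@star_rel n) s c.
Proof.
move=> sym hS hn.
set e := enum (Acnt c v S).
have se : size e = cnt c v S by rewrite /e -cardE.
have ue : uniq e by exact: enum_uniq.
have inA : forall i, i < size e -> nth v e i \in Acnt c v S.
  by move=> i hi; rewrite -mem_enum mem_nth.
pose f := fun i : 'I_n.+1 => if nat_of_ord i == 0 then v else nth v e (nat_of_ord i).-1.
have fA : forall i : 'I_n.+1, nat_of_ord i != 0 -> f i \in Acnt c v S.
  move=> i hi; rewrite /f (negbTE hi); apply: inA; rewrite se.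
  by move/eqP: hi; have := ltn_ord i; lia.
exists f; split.
  move=> i j; rewrite /f.
  case: (eqVneq (nat_of_ord i) 0) => hi; case: (eqVneq (nat_of_ord j) 0) => hj.
  - by move=> _; apply: ord_inj; rewrite hi hj.
  - move=> hv; have := fA j hj; rewrite /f (negbTE hj) -hv inE eqxx //.
  - move=> hv; have := fA i hi; rewrite /f (negbTE hi) hv inE eqxx //.
  - move=> /eqP; rewrite nth_uniq // ?se; last 2 first.
      by move/eqP: hi; have := ltn_ord i; lia.
      by move/eqP: hj; have := ltn_ord j; lia.
    by move/eqP: hi; move/eqP: hj => hj hi /eqP h; apply: ord_inj; lia.
apply: leq_trans hS; apply: subset_leq_card; apply/subsetP=> col.
case/imset2P=> u w _; rewrite !inE /star_rel => /orP[] /andP[/eqP hu hw] ->.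
  have := fA w hw; rewrite inE => /andP[_]; rewrite /f hu eqxx //.
have := fA u hw; rewrite inE => /andP[_]; rewrite /f hu eqxx sym //.
Qed.

Lemma cnt_of_copy : has_few_colored_copy (@star_rel n) s c ->
  exists v (S : {set 'I_t}), #|S| <= s /\ n <= cnt c v S.
Proof.
case=> f [finj hcard].
set S := [set c (f u) (f v) | u in _, v in _ & star_rel u v] in hcard.
exists (f ord0), S; split => //.
have hc : #|[set~ (ord0 : 'I_n.+1)]| = n by rewrite cardsC1 card_ord.
rewrite -[X in X <= _]hc.
rewrite -(card_in_imset (f := f)); last by move=> i j _ _; apply: finj.
apply: subset_leq_card; apply/subsetP=> u /imsetP[i]; rewrite !inE => hi ->.
rewrite (inj_eq finj) hi /=; apply/imset2P; exists ord0 i => //.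
rewrite !inE /star_rel /=.
by move: hi; rewrite -[i == ord0]/(nat_of_ord i == 0) => ->.
Qed.

End Copy.

Set Implicit Arguments. Unset Strict Implicit. Unset Printing Implicit Defensive.

Lemma sumD1_ge t (d : 'I_t -> nat) b h : (forall k, k != b -> h <= d k) ->
  d b + t.-1 * h <= \sum_k d k.
Proof.
move=> hk; rewrite (bigD1 b) //= leq_add2l.
apply: leq_trans (_ : \sum_(k | k != b) h <= _); last by apply: leq_sum.
by rewrite sum_nat_const cardC1 card_ord mulnC.
Qed.

Lemma vertex_bound t (d : 'I_t -> nat) s : 2 <= t ->
  (forall i j, i != j -> s <= d i + d j) -> s + (t-2) * (s.+1./2) <= \sum_k d k.
Proof.
move=> t2 hp.
case: (pickP (fun b => 2 * d b < s)) => [b hb|none].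
  have hk : forall k, k != b -> s - d b <= d k by move=> k hk; move: (hp k b hk); lia.
  have h2 := @sumD1_ge t d b (s - d b) hk.
  have h1 : s.+1./2 <= s - d b by lia.
  apply: leq_trans h2.
  have : (t - 2) * s.+1./2 <= (t-2) * (s - d b) by rewrite leq_mul2l h1 orbT.
  have -> : t.-1 = (t - 2).+1 by lia.
  by rewrite mulSn; lia.
have tp : 0 < t by lia.
pose b := Ordinal tp.
have hk : forall k, s.+1./2 <= d k by move=> k; have := none k; lia.
have := @sumD1_ge t d b (s.+1./2) (fun k _ => hk k).
have := hk b.
have -> : t.-1 = (t - 2).+1 by lia.
by rewrite mulSn; lia.
Qed.

Lemma vertex_uniform t (d : 'I_t -> nat) q : 3 <= t -> \sum_k d k = t * q ->
  (forall i j, i != j -> 2 * q <= d i + d j) -> forall k, d k = q.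
Proof.
move=> t2 hs hp.
have ge : forall b, q <= d b.
  move=> b; rewrite leqNgt; apply/negP=> lt.
  have hk : forall k, k != b -> 2 * q - d b <= d k by move=> k hk; move: (hp k b hk); lia.
  have := @sumD1_ge t d b (2 * q - d b) hk.
  rewrite hs => h.
  have e1 : t.-1 * (2 * q - d b) = t.-1 * q + t.-1 * (q - d b) by rewrite -mulnDr; congr (_ * _); lia.
  have e2 : 2 * (q - d b) <= t.-1 * (q - d b) by rewrite leq_mul2r; apply/orP; right; lia.
  have e3 : t * q = t.-1 * q + q by case: (t) t2 => // t0 _; rewrite mulSn addnC.
  lia.
move=> k; apply/eqP; rewrite eqn_leq ge andbT.
have := @sumD1_ge t d k q (fun j _ => ge j); rewrite hs.
have -> : t = t.-1.+1 by lia.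
by rewrite mulSn /=; lia.
Qed.

Lemma handshake N t (c : 'I_N -> 'I_N -> 'I_t) k : coloring c ->
  ~~ odd (\sum_v deg c v k).
Proof.
move=> sym.
have e1 : forall v, deg c v k = \sum_u ((u != v) && (c v u == k) : nat).
  move=> v; rewrite /deg /cnt -sum1dep_card big_mkcond /=.
  by apply: eq_bigr=> u _; rewrite !inE; case: ifP.
under eq_bigr => v _ do rewrite e1.
have e2 : forall v u, ((u != v) && (c v u == k) : nat) =
     ((u < v) && (c v u == k) : nat) + ((v < u) && (c v u == k) : nat).
  move=> v u; case: (ltngtP u v) => h /=.
  - by case: eqP => [e|_]; [rewrite e ltnn in h | rewrite addn0].
  - by case: eqP => [e|_]; [rewrite e ltnn in h | rewrite add0n].
  - by case: eqP => [_|ne] //; case: ne; apply: ord_inj.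
under eq_bigr => v _ do under eq_bigr => u _ do rewrite e2.
under eq_bigr => v _ do rewrite big_split /=.
rewrite big_split /= [X in _ + X]exchange_big /=.
have -> : \sum_(u : 'I_N) \sum_(v : 'I_N) ((v < u) && (c v u == k) : nat) =
          \sum_(u : 'I_N) \sum_(v : 'I_N) ((v < u) && (c u v == k) : nat).
  by apply: eq_bigr=> u _; apply: eq_bigr=> v _; rewrite sym.
by rewrite addnn odd_double.
Qed.

Set Implicit Arguments. Unset Strict Implicit. Unset Printing Implicit Defensive.

Section Constr.
Variables (t : nat) (tp : 0 < t).

Definition colr (i : nat) : 'I_t := Ordinal (ltn_pmod i tp).
Definition mkc N (f : nat -> nat -> nat) : 'I_N -> 'I_N -> 'I_t :=
  fun u v => colr (f u v).

Lemma mkc_sym N f : (forall u v, f u v = f v u) -> coloring (@mkc N f).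
Proof. by move=> h u v; rewrite /mkc h. Qed.

Lemma deg_lb N' q (f : nat -> nat -> nat) (v : 'I_N'.+1) L (psi : nat -> nat) :
  t * q <= L ->
  (forall i, i < L -> [/\ psi i < N'.+1, psi i != v & f v (psi i) %% t = i %% t]) ->
  (forall i j, i < L -> j < L -> psi i = psi j -> i = j) ->
  forall k : 'I_t, q <= deg (@mkc N'.+1 f) v k.
Proof.
move=> hL hp hi k.
have bd : forall j : 'I_q, j * t + k < L.
  move=> j; have : j.+1 * t <= q * t by rewrite leq_mul2r ltn_ord orbT.
  rewrite mulSn => h; have := ltn_ord k; lia.
pose g := fun j : 'I_q => (inord (psi (j * t + k)) : 'I_N'.+1).
have gv : forall j, nat_of_ord (g j) = psi (j * t + k).
  by move=> j; rewrite /g inordK //; case: (hp _ (bd j)).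
have -> : q = #|[set g j | j in [set: 'I_q]]|.
  rewrite card_in_imset ?cardsT ?card_ord // => j1 j2 _ _ /(congr1 val) /=.
  rewrite !gv => /(hi _ _ (bd j1) (bd j2)) /eqP.
  by rewrite eqn_add2r eqn_mul2r eqn0Ngt tp /= => /eqP /ord_inj.
apply: subset_leq_card; apply/subsetP=> u /imsetP[j _ ->].
case: (hp _ (bd j)) => _ hne hc.
rewrite !inE; apply/andP; split.
  by apply/negP=> /eqP /(congr1 val); rewrite /= gv => e; rewrite e eqxx in hne.
apply/eqP/ord_inj; rewrite /mkc /colr /= gv hc.
by rewrite modnMDl modn_small.
Qed.

Definition addm x a b := if a + b < x then a + b else a + b - x.

Definition fE p u v :=
  if u == p then addm p v v else if v == p then addm p u u else addm p u v.
Definition psiE p v i :=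
  if v == p then (if i %% 2 == 1 then (i + p) %/ 2 else i %/ 2)
  else if i == addm p v v then p
  else if v <= i then i - v else i + p - v.

Lemma fE_sym p u v : fE p u v = fE p v u.
Proof.
rewrite /fE /addm; case: (eqVneq u p) => hu; case: (eqVneq v p) => hv //.
  by rewrite hu hv.
by rewrite addnC.
Qed.

Lemma psiE_ok p v i : odd p -> v <= p -> i < p ->
  [/\ psiE p v i <= p, psiE p v i != v & fE p v (psiE p v i) = i].
Proof.
move=> op vp ip; have op' : p %% 2 = 1 by rewrite modn2 op.
rewrite /psiE /fE /addm.
case: (eqVneq v p) => hv.
  subst v.
  have [y [-> hy1 hy2]] : exists y, [/\ (if i %% 2 == 1 then (i + p) %/ 2 else i %/ 2) = y, y < p
      & (y + y = i \/ y + y = i + p)].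
    by case: ifP => h; (eexists; split; [reflexivity | lia | lia]).
  split; [lia | apply/eqP; lia | idtac]. case: ifP => h. lia. lia.
case: (eqVneq i (if v + v < p then v + v else v + v - p)) => hi.
  by split=> //; [rewrite eq_sym | rewrite eqxx hi].
move: hi; case: (leqP v i) => hvi hi.
  have h1 : (i - v == p) = false by apply/eqP; lia.
  rewrite h1; split; [lia | apply/eqP; move: hi; case: ifP => ? ?; lia |].
  by move: hi; case: ifP => ? ?; case: ifP => ?; lia.
have h1 : (i + p - v == p) = false by apply/eqP; lia.
rewrite h1; split; [lia | apply/eqP; move: hi; case: ifP => ? ?; lia |].
by move: hi; case: ifP => ? ?; case: ifP => ?; lia.
Qed.

Lemma psiE_inj p v i j : odd p -> v <= p -> i < p -> j < p ->
  psiE p v i = psiE p v j -> i = j.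
Proof.
move=> op vp ip jp; have op' : p %% 2 = 1 by rewrite modn2 op.
rewrite /psiE /addm.
case: (eqVneq v p) => hv.
  by subst v; case: ifP => ?; case: ifP => ?; lia.
case: (ltnP (v + v) p) => hvv; case: eqP => ?; case: eqP => ?; case: (leqP v i) => ?; case: (leqP v j) => ?; lia.
Qed.

Lemma consE p q : odd p -> t * q <= p ->
  exists c : 'I_p.+1 -> 'I_p.+1 -> 'I_t, coloring c /\ forall v k, q <= deg c v k.
Proof.
move=> op hq; exists (@mkc p.+1 (fE p)); split; first by apply: mkc_sym; exact: fE_sym.
move=> v k; apply: (@deg_lb p q (fE p) v p (psiE p v)) => //.
  move=> i ip; have := ltn_ord v; rewrite ltnS => vp.
  by case: (psiE_ok op vp ip) => h1 h2 h3; split => //; rewrite h3.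
by move=> i j ip jp; apply: psiE_inj; rewrite // -ltnS.
Qed.

Definition fO p u v := if u == p.+1 then v else if v == p.+1 then u else fE p u v.

Lemma fO_sym p u v : fO p u v = fO p v u.
Proof.
rewrite /fO; case: (eqVneq u p.+1) => hu; case: (eqVneq v p.+1) => hv //.
  by rewrite hu hv.
exact: fE_sym.
Qed.

Lemma consO1 p q : odd p -> t * q <= p ->
  exists c : 'I_p.+2 -> 'I_p.+2 -> 'I_t, coloring c /\ forall v k, q <= deg c v k.
Proof.
move=> op hq; exists (@mkc p.+2 (fO p)); split; first by apply: mkc_sym; exact: fO_sym.
move=> v k.
case: (eqVneq (nat_of_ord v) p.+1) => hv.
  apply: (@deg_lb p.+1 q (fO p) v p.+1 id); first by lia.
    move=> i ip; split; [lia | apply/eqP; lia | rewrite /fO]; by case: eqP.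
  by [].
have vp : v <= p by have := ltn_ord v; move/eqP: hv; lia.
apply: (@deg_lb p.+1 q (fO p) v p (psiE p v)) => //.
  move=> i ip; case: (psiE_ok op vp ip) => h1 h2 h3; split => //; first by lia.
  rewrite /fO (negbTE hv); have -> : (psiE p v i == p.+1) = false by apply/eqP; lia.
  by rewrite h3.
by move=> i j ip jp; apply: psiE_inj.
Qed.

(* construction O2 : circulant on 2m+1 vertices *)
Definition dst x u v :=
  let d := if v <= u then u - v else u + x - v in minn d (x - d).
Definition fC x u v := (dst x u v).-1.
Definition psiC x m v i :=
  if i < m then addm x v i.+1
  else let d := i - m + 1 in if d <= v then v - d else v + x - d.

Lemma fC_sym x u v : u < x -> v < x -> fC x u v = fC x v u.
Proof.
move=> ux vx; rewrite /fC /dst.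
by case: ifP => h1; case: ifP => h2; congr (_.-1); lia.
Qed.

Lemma psiC_ok m v i : v < m.*2.+1 -> i < m.*2 ->
  [/\ psiC m.*2.+1 m v i < m.*2.+1, psiC m.*2.+1 m v i != v &
      fC m.*2.+1 v (psiC m.*2.+1 m v i) = if i < m then i else i - m].
Proof.
move=> vx ix; rewrite /psiC /fC /dst /addm.
case: (ltnP i m) => h1 /=.
  case: (ltnP (v + i.+1) m.*2.+1) => h2.
    split; [lia | apply/eqP; lia |].
    by case: ifP => h3; lia.
  split; [lia | apply/eqP; lia |].
  by case: ifP => h3; lia.
case: (leqP (i - m + 1) v) => h2.
  split; [lia | apply/eqP; lia |].
  by case: ifP => h3; lia.
split; [lia | apply/eqP; lia |].
by case: ifP => h3; lia.
Qed.

Lemma psiC_inj m v i j : v < m.*2.+1 -> i < m.*2 -> j < m.*2 ->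
  psiC m.*2.+1 m v i = psiC m.*2.+1 m v j -> i = j.
Proof.
move=> vx ix jx; rewrite /psiC /addm.
case: (ltnP i m) => h1; case: (ltnP j m) => h2 /=;
case: ifP => h3; case: ifP => h4; lia.
Qed.

Lemma consO2 m w : m = t * w ->
  exists c : 'I_(m.*2).+1 -> 'I_(m.*2).+1 -> 'I_t, coloring c /\ forall v k, w.*2 <= deg c v k.
Proof.
move=> hm; set x := (m.*2).+1.
pose f := fun u v => if (u < x) && (v < x) then fC x u v else 0.
exists (@mkc x f); split.
  apply: mkc_sym => u v; rewrite /f andbC; case: ifP => // /andP[h1 h2].
  exact: fC_sym.
move=> v k.
have vx : v < x := ltn_ord v.
apply: (@deg_lb m.*2 w.*2 f v m.*2 (psiC x m v)).
- by rewrite hm -!muln2 mulnA.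
- move=> i ip; case: (psiC_ok vx ip) => h1 h2 h3; split => //.
  rewrite /f vx h1 /= h3.
  case: ifP => // him.
  by rewrite [in RHS](_ : i = w * t + (i - m)) ?modnMDl //; lia.
- by move=> i j ip jp; apply: psiC_inj.
Qed.

End Constr.

Set Implicit Arguments. Unset Strict Implicit. Unset Printing Implicit Defensive.

Section Main.
Variables (t n : nat).

Definition avoid N := exists c : 'I_N -> 'I_N -> 'I_t,
  coloring c /\ ~ has_few_colored_copy (@star_rel n) (t - 2) c.

Lemma no_copy_of_deg N (c : 'I_N -> 'I_N -> 'I_t) q : 2 <= t -> coloring c ->
  (forall v k, q <= deg c v k) -> N.-1 < n + 2 * q ->
  ~ has_few_colored_copy (@star_rel n) (t - 2) c.
Proof.
move=> t2 sym hq hN /cnt_of_copy [v [S [hS hn]]].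
have : 1 < #|~: S| by have := cardsC S; rewrite card_ord; lia.
case/card_gt1P=> i [j [hi hj ij]].
have sub : S \subset ~: [set i; j].
  apply/subsetP=> k hk; rewrite !inE; apply/negP=> /orP[] /eqP e; subst k.
    by rewrite inE hk in hi.
  by rewrite inE hk in hj.
have := cnt_sub c v sub; have := cnt_pair c v ij; have := hq v i; have := hq v j.
lia.
Qed.

Lemma pair_of_nocopy N (c : 'I_N -> 'I_N -> 'I_t) : 2 <= t -> coloring c ->
  ~ has_few_colored_copy (@star_rel n) (t - 2) c ->
  forall v i j, i != j -> N - n <= deg c v i + deg c v j.
Proof.
move=> t2 sym hno v i j ij.
have hN : 0 < N by case: (N) v => [[]|].
have e := cnt_pair c v ij.
case: (leqP n (cnt c v (~: [set i; j]))) => h; last by lia.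
exfalso; apply: hno; apply: (copy_of_cnt sym _ h).
by have := cardsC [set i; j]; rewrite card_ord cards2 ij; lia.
Qed.

Lemma restrict N M : N <= M -> avoid M -> avoid N.
Proof.
move=> NM [c [sym hno]].
exists (fun u v => c (widen_ord NM u) (widen_ord NM v)); split.
  by move=> u v; apply: sym.
case=> f [finj hc]; apply: hno.
exists (fun i => widen_ord NM (f i)); split => //.
by move=> i j /(congr1 val) /= /ord_inj /finj.
Qed.

Lemma is_Rst_iff x : 0 < x ->
  is_Rst (@star_rel n) (t - 2) t x.+1 <-> ramsey_prop (@star_rel n) (t - 2) t x.+1 /\ avoid x.
Proof.
move=> x0; split.
  case=> _ [hr hmin]; split => //.
  have := hmin x x0 (ltnSn x); rewrite /ramsey_prop => hn.
  apply: NNPP => hav; apply: hn => c sym; apply: NNPP => hno; apply: hav.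
  by exists c.
case=> hr hav; split => //; split => // N N0 Nx hN.
have [c [sym hno]] := restrict (Nx : N <= x) hav.
exact: hno (hN c sym).
Qed.

End Main.

Set Implicit Arguments. Unset Strict Implicit. Unset Printing Implicit Defensive.

Section Arith.
Variables (t t' n a x q1 r1 : nat).
Hypotheses (Ht : t = 2 * t' \/ t = 2 * t' + 1) (Ht' : 2 <= t') (Hx : x = n + a)
  (Ha1 : a * (t' - 1) <= n - 1) (Ha2 : n - 1 < (a + 1) * (t' - 1)) (Hn : 1 <= n)
  (Hq : x - 1 = t * q1 + r1) (Hr : r1 < t).

Lemma A_upper : (a + 1) + (t - 2) * ((a + 2) %/ 2) <= x -> False.
Proof.
set h := (a + 2) %/ 2.
have h2 : a + 1 <= 2 * h by rewrite /h; lia.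
have E1 : (2 * (t' - 1)) * h <= (t - 2) * h by rewrite leq_mul2r; apply/orP; right; lia.
have E2 : (a + 1) * (t' - 1) <= (2 * h) * (t' - 1) by rewrite leq_mul2r h2 orbT.
have E3 : (2 * h) * (t' - 1) = (2 * (t' - 1)) * h by rewrite -!mulnA (mulnC h).
lia.
Qed.

Lemma A_nec : a + (t - 2) * ((a + 1) %/ 2) <= x - 1 -> a <= 2 * q1.
Proof.
move=> H; rewrite leqNgt; apply/negP=> lt.
set h := (a + 1) %/ 2 in H.
have hh : q1 + 1 <= h by rewrite /h; lia.
have E1 : (t - 2) * (q1 + 1) <= (t - 2) * h by rewrite leq_mul2l hh orbT.
have E2a : (t - 2) * (q1 + 1) = t * (q1 + 1) - 2 * (q1 + 1) by rewrite mulnBl.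
have E2b : t * (q1 + 1) = t * q1 + t by rewrite mulnDr muln1.
have E2c : 2 * (q1 + 1) <= t * (q1 + 1) by rewrite leq_mul2r; apply/orP; right; lia.
have Ea : a = 2 * q1 + 1 by lia.
have E3 : t' * a = 2 * (t' * q1) + t' by rewrite Ea mulnDr muln1 mulnCA.
have E4 : 2 * (t' * q1) <= t * q1 by rewrite mulnA leq_mul2r; apply/orP; right; lia.
have E5 : a * (t' - 1) + a = t' * a.
  by rewrite mulnC mulnBl mul1n subnK //; rewrite leq_pmull //; lia.
have E6 : (a + 1) * (t' - 1) = a * (t' - 1) + (t' - 1) by rewrite mulnDl mul1n.
lia.
Qed.

Lemma A_r0 : r1 = 0 -> 2 * q1 <= a.
Proof.
move=> r0.
have E5 : a * (t' - 1) + a = t' * a.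
  by rewrite mulnC mulnBl mul1n subnK //; rewrite leq_pmull //; lia.
have E6 : (a + 1) * (t' - 1) = a * (t' - 1) + (t' - 1) by rewrite mulnDl mul1n.
have E4 : 2 * (t' * q1) <= t * q1 by rewrite mulnA leq_mul2r; apply/orP; right; lia.
rewrite leqNgt; apply/negP=> lt.
have : t' * (a + 1) <= t' * (2 * q1) by rewrite leq_mul2l; apply/orP; right; lia.
rewrite mulnDr muln1 mulnCA; lia.
Qed.

End Arith.

Lemma oddE m : odd m = (m %% 2 == 1).
Proof. by rewrite modn2; case: (odd m). Qed.

Section Crit.
Variables (t t' n a x q1 r1 : nat).
Hypotheses (Ht : t = 2 * t' \/ t = 2 * t' + 1) (Hto : odd t = (t == 2 * t' + 1)) (Ht' : 2 <= t') (Hx : x = n + a)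
  (Ha1 : a * (t' - 1) <= n - 1) (Ha2 : n - 1 < (a + 1) * (t' - 1)) (Hn : 1 <= n)
  (Hq : x - 1 = t * q1 + r1) (Hr : r1 < t).

Definition Fn :=
  (r1 = 0 /\ 2 * q1 + 3 < t /\ ~~ odd x) \/
  (r1 = 0 /\ 2 * q1 + 3 < t /\ odd x /\ odd t) \/
  (r1 = 0 /\ odd x /\ ~~ odd t /\ ~~ odd q1) \/
  ((1 <= r1 /\ r1 < t - 1 /\ 2 * r1 + 2 < t) /\ ~~ odd t) \/
  ((1 <= r1 /\ r1 < t - 1 /\ 2 * q1 + 2 * r1 + 3 < t) /\ odd t).

Lemma crit_iff : (a <= 2 * q1 /\ ~ (odd x /\ r1 = 0 /\ odd q1)) <-> Fn.
Proof.
have E5 : a * (t' - 1) + a = t' * a.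
  by rewrite mulnC mulnBl mul1n subnK //; rewrite leq_pmull //; lia.
have E6 : (a + 1) * (t' - 1) = a * (t' - 1) + (t' - 1) by rewrite mulnDl mul1n.
have Ea : (a <= 2 * q1) = (t' * a <= 2 * (t' * q1)).
  by rewrite mulnCA leq_pmul2l //; lia.
have Eb : (a <= 2 * q1) = (t' * a < 2 * (t' * q1) + t').
  by rewrite -ltnS -(ltn_pmul2l (_ : 0 < t')) ?mulnS; [congr (_ < _); rewrite mulnCA; lia | lia].
have Eq : t * q1 = 2 * (t' * q1) + (if odd t then q1 else 0).
  rewrite Hto; case: Ht => ->.
    by rewrite (_ : (2 * t' == 2 * t' + 1) = false) ?addn0 ?mulnA //; lia.
  by rewrite eqxx mulnDl mul1n mulnA.
have Hq' : x - 1 = 2 * (t' * q1) + (if odd t then q1 else 0) + r1 by rewrite -Eq.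
rewrite Ea in Eb.
rewrite /Fn Ea.
case: (boolP (odd t)) => ot; [rewrite ot /= in Hq' * | rewrite (negbTE ot) /= in Hq' *].
  have ht : t = 2 * t' + 1 by move: Hto; rewrite ot => /esym /eqP.
  rewrite !oddE.
  split.
    move=> [h1 h2].
    case: (posnP r1) => hr.
      case: (eqVneq (x %% 2) 1) => hxo.
        by right; left; lia.
      by left; lia.
    by right; right; right; right; lia.
  case=> [|[|[|[|]]]].
  - move=> [? [? ?]]; split; first by lia.
    by case=> ? [? ?]; lia.
  - move=> [? [? [? ?]]]; split; first by lia.
    by case=> ? [? ?]; lia.
  - by move=> [? [? [? ?]]].
  - by move=> [_ ?].
  - move=> [[? [? ?]] _]; split; first by lia.
    by case=> ? [? ?]; lia.
have ht : t = 2 * t' by case: Ht => // h; move: Hto; rewrite (negbTE ot) h eqxx.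
rewrite !oddE.
split.
  move=> [h1 h2].
  case: (posnP r1) => hr.
    right; right; left; split => //; split; first by lia.
    split => //; apply/negP => hq; apply: h2; split; first by lia.
    by split => //; lia.
  right; right; right; left; split => //; lia.
case=> [|[|[|[|]]]].
- by move=> [? [? ?]]; lia.
- by move=> [? [? [? ?]]].
- move=> [? [? [? ?]]]; split; first by lia.
  by case=> ? [? ?]; lia.
- move=> [[? [? ?]] _]; split; first by lia.
  by case=> ? [? ?]; lia.
- by move=> [_ ?].
Qed.

End Crit.

Set Implicit Arguments. Unset Strict Implicit. Unset Printing Implicit Defensive.


Lemma int_conv (t x q1 r1 : nat) (q r : int) : 4 <= t -> 1 <= x ->
  x - 1 = t * q1 + r1 -> r1 < t ->
  (x%:Z - 2 = t%:Z * q + r)%R -> (0 <= r)%R -> (r <= t%:Z - 1)%R ->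
  (((r = t%:Z - 1 /\ 2 * q + 4 < r)%R /\ ~~ odd x) \/
       ((r = t%:Z - 1 /\ 2 * q + 4 < r)%R /\ odd x /\ odd t) \/
       ((r = t%:Z - 1)%R /\ odd x /\ ~~ odd t /\ (q + 1)%R \in dvdz 2) \/
       ((r < t%:Z - 2 /\ 2 * r + 4 < t%:Z)%R /\ ~~ odd t) \/
       ((r < t%:Z - 2 /\ 2 * q + 2 * r + 5 < t%:Z)%R /\ odd t)) <-> Fn t x q1 r1.
Proof.
move=> t4 x1 hq hr e r0 rt.
have hq' : (x%:Z - 1 = t%:Z * q1%:Z + r1%:Z)%R by lia.
have [[h1 [h2 h3]]|[h1 [h2 h3]]] : ((r = t%:Z - 1)%R /\ (q = q1%:Z - 1)%R /\ r1 = 0) \/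
    ((r = r1%:Z - 1)%R /\ (q = q1%:Z)%R /\ 1 <= r1).
  have eD : (t%:Z * (q1%:Z - q) = r + 1 - r1%:Z)%R by lia.
  have t0 : (0 <= t%:Z)%R by lia.
  case: (lerP 2 (q1%:Z - q)%R) => h2.
    by have := ler_wpM2l t0 h2; lia.
  case: (lerP (q1%:Z - q)%R (-1)) => h3.
    by have := ler_wpM2l t0 h3; lia.
  have [hD|hD] : (q1%:Z - q = 0)%R \/ (q1%:Z - q = 1)%R by lia.
    by rewrite hD in eD; right; lia.
  by rewrite hD in eD; left; lia.
  subst r q; rewrite /Fn h3.
  have -> : ((q1%:Z - 1 + 1)%R \in dvdz 2) = ~~ odd q1.
    by rewrite GRing.subrK dvdzE /= -dvdn2.
  split.
    case=> [|[|[|[|]]]].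
    - by move=> [[_ ?] ?]; left; split => //; lia.
    - by move=> [[_ ?] ?]; right; left; split => //; lia.
    - by move=> [_ ?]; right; right; left.
    - by move=> [[? _] _]; lia.
    - by move=> [[? _] _]; lia.
  case=> [|[|[|[|]]]].
  - by move=> [_ [? ?]]; left; split => //; lia.
  - by move=> [_ [? ?]]; right; left; split => //; lia.
  - by move=> [_ ?]; right; right; left.
  - by move=> [[? _] _]; lia.
  - by move=> [[? _] _]; lia.
subst r q; rewrite /Fn.
have -> : (r1 = 0) <-> False by split => //; lia.
split.
  case=> [|[|[|[|]]]].
  - by move=> [[? _] _]; lia.
  - by move=> [[? _] _]; lia.
  - by move=> [? _]; lia.
  - by move=> [? ?]; right; right; right; left; split => //; lia.
  - by move=> [? ?]; right; right; right; right; split => //; lia.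
case=> [|[|[|[|]]]].
- by move=> [? _].
- by move=> [? _].
- by move=> [? _].
- by move=> [? ?]; right; right; right; left; split => //; lia.
- by move=> [? ?]; right; right; right; right; split => //; lia.
Qed.

Set Implicit Arguments. Unset Strict Implicit. Unset Printing Implicit Defensive.


Section Fin.
Variables (t t' n a x q1 r1 : nat).
Hypotheses (Ht : t = 2 * t' \/ t = 2 * t' + 1) (Ht' : 2 <= t') (Hx : x = n + a)
  (Ha1 : a * (t' - 1) <= n - 1) (Ha2 : n - 1 < (a + 1) * (t' - 1)) (Hn : 1 <= n)
  (Hq : x - 1 = t * q1 + r1) (Hr : r1 < t).

Let t2 : 2 <= t. Proof. lia. Qed.
Let tp : 0 < t. Proof. lia. Qed.

Lemma ramsey_up : ramsey_prop (@star_rel n) (t - 2) t x.+1.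
Proof.
move=> c sym; apply: NNPP => hno.
have hp := pair_of_nocopy t2 sym hno (ord0 : 'I_x.+1).
have := vertex_bound t2 (fun i j ij => hp i j ij).
rewrite cnt_sum -divn2 => hb.
apply: (A_upper Ht Ht' Hx Ha1 Ha2 Hn Hq Hr).
have -> : a + 2 = (x.+1 - n).+1 by lia.
have -> : a + 1 = x.+1 - n by lia.
exact: hb.
Qed.

Lemma C_of_avoid : avoid t n x -> a <= 2 * q1 /\ ~ (odd x /\ r1 = 0 /\ odd q1).
Proof.
case=> c [sym hno].
have x0 : 0 < x by lia.
have hp := pair_of_nocopy t2 sym hno.
have hb := vertex_bound t2 (hp (Ordinal x0)).
rewrite cnt_sum -divn2 in hb.
have ha : a <= 2 * q1.
  apply: (A_nec Ht Ht' Hx Ha1 Ha2 Hn Hq Hr).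
  have -> : a = x - n by lia.
  by move: hb; rewrite -subn1 addn1.
split => // -[ox [r0 oq]].
have ha' := A_r0 Ht Ht' Hx Ha1 Ha2 Hn Hq Hr r0.
have hu : forall v k, deg c v k = q1.
  move=> v; apply: (@vertex_uniform t (deg c v) q1); first by lia.
    by rewrite cnt_sum; lia.
  by move=> i j ij; have := hp v i j ij; lia.
have := handshake (Ordinal tp) sym.
under eq_bigr => v _ do rewrite hu.
by rewrite sum_nat_const card_ord oddM ox oq.
Qed.

Lemma avoid_of_C : a <= 2 * q1 -> ~ (odd x /\ r1 = 0 /\ odd q1) -> avoid t n x.
Proof.
move=> ha hob.
have hlt : x.-1 < n + 2 * q1 by lia.
suff [c [sym hdeg]] : exists c : 'I_x -> 'I_x -> 'I_t, coloring c /\ forall v k, q1 <= deg c v k.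
  by exists c; split => //; apply: (no_copy_of_deg t2 sym hdeg hlt).
have x0 : 0 < x by lia.
case: (boolP (odd x)) => ox.
  case: (posnP r1) => r0.
    have eq1 : ~~ odd q1 by apply/negP => oq; apply: hob.
    have ex : x = (x./2).*2.+1 by rewrite -[x in x = _]odd_double_half ox add1n.
    have hm : x./2 = t * q1./2.
      have := odd_double_half q1; rewrite (negbTE eq1) add0n -muln2 => e.
      have e2 : t * q1 = 2 * (t * q1./2) by rewrite -[q1 in LHS]e mulnA mulnC.
      move: ex; rewrite -muln2 => ex; lia.
    have [c [sym hd]] := consO2 tp hm.
    move: c sym hd; rewrite -ex => c sym hd; exists c; split => // v k.
    by have := hd v k; have := odd_double_half q1; rewrite (negbTE eq1) add0n => ->.
  have ex : x = (x - 2).+2 by lia.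
  have op : odd (x - 2) by move: ox; rewrite {1}ex /= negbK.
  have [c [sym hd]] := consO1 tp (q := q1) op ltac:(lia).
  by move: c sym hd; rewrite -ex => c sym hd; exists c.
have ex : x = x.-1.+1 by lia.
have op : odd x.-1 by move: ox; rewrite {1}ex /= negbK.
have [c [sym hd]] := consE tp (q := q1) op ltac:(lia).
by move: c sym hd; rewrite -ex => c sym hd; exists c.
Qed.

End Fin.

Unset Implicit Arguments. Set Strict Implicit.

Theorem theorem5 (t n : nat) (q r : int) :
  4 <= t -> 1 <= n ->
  let t' := t./2 in
  let x := (n * t' - 1) %/ (t' - 1) in
  (x%:Z - 2 = t%:Z * q + r)%R -> (0 <= r)%R -> (r <= t%:Z - 1)%R ->
  (is_Rst (@star_rel n) (t - 2) t x.+1 <->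
   ((r = t%:Z - 1 /\ 2 * q + 4 < r)%R /\ ~~ odd x) \/
       ((r = t%:Z - 1 /\ 2 * q + 4 < r)%R /\ odd x /\ odd t) \/
       ((r = t%:Z - 1)%R /\ odd x /\ ~~ odd t /\ (q + 1)%R \in dvdz 2) \/
       ((r < t%:Z - 2 /\ 2 * r + 4 < t%:Z)%R /\ ~~ odd t) \/
       ((r < t%:Z - 2 /\ 2 * q + 2 * r + 5 < t%:Z)%R /\ odd t)).
Proof.
move=> t4 n1 t' x hq r0 rt.
have hdh := odd_double_half t.
have Ht : t = 2 * t' \/ t = 2 * t' + 1.
  by move: hdh; rewrite -/t' -mul2n; case: (odd t) => /= <-; [right | left]; lia.
have Hto : odd t = (t == 2 * t' + 1).
  by move: hdh; rewrite -/t' -mul2n; case: (odd t) => /= <-; apply/esym/eqP; lia.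
have Ht' : 2 <= t' by case: Ht; lia.
set a := (n - 1) %/ (t' - 1).
have Tp : 0 < t' - 1 by lia.
have Hx : x = n + a.
  rewrite /x (_ : n * t' - 1 = n * (t' - 1) + (n - 1)).
    by rewrite divnMDl.
  have : n * t' = n * (t' - 1) + n by rewrite -[in LHS](subnK (ltnW Ht')) mulnDr muln1.
  lia.
have Ha1 : a * (t' - 1) <= n - 1 by apply: leq_trunc_div.
have Ha2 : n - 1 < (a + 1) * (t' - 1) by rewrite addn1; apply: ltn_ceil.
set q1 := (x - 1) %/ t.
set r1 := (x - 1) %% t.
have tp : 0 < t by lia.
have Hq : x - 1 = t * q1 + r1 by rewrite mulnC; apply: divn_eq.
have Hr : r1 < t by apply: ltn_pmod.
have x0 : 0 < x by lia.
rewrite (is_Rst_iff t n x0).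
rewrite (int_conv t4 x0 Hq Hr hq r0 rt).
rewrite -(crit_iff Ht Hto Ht' Hx Ha1 Ha2 n1 Hq Hr).
split.
  by case=> _ hav; apply: (C_of_avoid Ht Ht' Hx Ha1 Ha2 n1 Hq Hr).
case=> ha hob; split.
  exact: (ramsey_up Ht Ht' Hx Ha1 Ha2 n1 Hq Hr).
exact: (avoid_of_C Ht Ht' Hx Ha1 Ha2 n1 Hq Hr ha hob).
Qed.
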